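(* Let $(A,m,1,\Delta',\varepsilon,T)$ be a commutative Hopf algebra over a field $k$, with $\Delta'(a)=a_{1'}\otimes a_{2'}$. Assume that $(A,A)$ (both copies being this Hopf algebra) is a Hopf matched pair with coactions $\rho(a)=a_{(-1)}\otimes a_{(0)}$ and $\varphi(a)=a_{[0]}\otimes a_{[1]}$ such that for all $a\in A$ $$a_{1'}\otimes a_{2'}=a_{1'(-1)}a_{2'[0]}\otimes a_{1'(0)}a_{2'[1]}.$$ Then $(A,\Delta,\Delta')$ is a commutative Hopf brace, where the first Hopf algebra structure $(A,m,1,\Delta,\varepsilon,S)$ is given by $$\Delta(a)=a_1\otimes a_2=a_{1'}T(a_{2'(-1)})\otimes a_{2'(0)},\qquad S(a)=a_{(-1)}T(a_{(0)}),$$ for all $a\in A$.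
   Context: All objects are over a field $k$. Hopf matched pair: for Hopf algebras $A$ and $H$, a pair $(A,H)$ with linear maps $\rho:A\to H\otimes A$, $\rho(a)=a_{(-1)}\otimes a_{(0)}$, and $\varphi:H\to H\otimes A$, $\varphi(h)=h_{[0]}\otimes h_{[1]}$, such that $(A,\rho)$ is a left $H$-comodule algebra, $(H,\varphi)$ is a right $A$-comodule algebra (coactions are algebra maps), and for all $a\in A,h\in H$ (with comultiplications written $x_1\otimes x_2$): (HM1) $a_{(-1)}\varepsilon_A(a_{(0)})=\varepsilon_A(a)1_H$, $\varepsilon_H(h_{[0]})h_{[1]}=\varepsilon_H(h)1_A$; (HM2) $a_{(-1)}\otimes a_{(0)1}\otimes a_{(0)2}=a_{1(-1)}a_{2(-1)[0]}\otimes a_{1(0)}a_{2(-1)[1]}\otimes a_{2(0)}$; (HM3) $h_{[0]1}\otimes h_{[0]2}\otimes h_{[1]}=h_{1[0]}\otimes h_{1[1](-1)}h_{2[0]}\otimes h_{1[1](0)}h_{2[1]}$; (HM4) $h_{[0]}a_{(-1)}\otimes h_{[1]}a_{(0)}=a_{(-1)}h_{[0]}\otimes a_{(0)}h_{[1]}$. A Hopf brace $(A,\Delta,\Delta')$ consists of an algebra with two Hopf algebra structures $(A,m,1,\Delta,\varepsilon,S)$ and $(A,m,1,\Delta',\epsilon,T)$ such that for all $h$: $h_{1'}\otimes h_{2'1}\otimes h_{2'2}=h_{11'}S(h_2)h_{31'}\otimes h_{12'}\otimes h_{32'}$ (where $\Delta(h)=h_1\otimes h_2$, $\Delta'(h)=h_{1'}\otimes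 h_{2'}$ and e.g. $h_{31'}$ is $\Delta'$ applied to $h_3$); it is commutative if $A$ is commutative. *)

(* Defs.v *)
From HB Require Import structures.
From mathcomp Require Import all_boot all_order all_algebra.
Set Implicit Arguments. Unset Strict Implicit. Unset Printing Implicit Defensive.
Import GRing.Theory.
Local Open Scope ring_scope.

(* Tensors are represented by finite lists of elementary tensors
   (seq (X * Y) stands for  sum_i x_i (x) y_i ).  Two such representatives
   are equal in X (x) Y iff they are identified by every bilinear map into
   every k-vector space (universal property of the tensor product). *)

Section Tensors.
Variable k : fieldType.

Definition bilinear_map (X Y V : lmodType k) (f : X -> Y -> V) : Prop :=
  (forall (y : Y) (c : k) (x1 x2 : X), f (c *: x1 + x2) y = c *: f x1 y + f x2 y) /\
  (forall (x : X) (c : k) (y1 y2 : Y), f x (c *: y1 + y2) = c *: f x y1 + f x y2).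

Definition trilinear_map (X Y Z V : lmodType k) (f : X -> Y -> Z -> V) : Prop :=
  (forall (y : Y) (z : Z) (c : k) (x1 x2 : X),
      f (c *: x1 + x2) y z = c *: f x1 y z + f x2 y z) /\
  (forall (x : X) (z : Z) (c : k) (y1 y2 : Y),
      f x (c *: y1 + y2) z = c *: f x y1 z + f x y2 z) /\
  (forall (x : X) (y : Y) (c : k) (z1 z2 : Z),
      f x y (c *: z1 + z2) = c *: f x y z1 + f x y z2).

Definition teq2 (X Y : lmodType k) (s t : seq (X * Y)) : Prop :=
  forall (V : lmodType k) (f : X -> Y -> V), bilinear_map f ->
    \sum_(p <- s) f p.1 p.2 = \sum_(p <- t) f p.1 p.2.

Definition teq3 (X Y Z : lmodType k) (s t : seq (X * Y * Z)) : Prop :=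
  forall (V : lmodType k) (f : X -> Y -> Z -> V), trilinear_map f ->
    \sum_(p <- s) f p.1.1 p.1.2 p.2 = \sum_(p <- t) f p.1.1 p.1.2 p.2.

Definition tscale (X Y : lmodType k) (c : k) (s : seq (X * Y)) : seq (X * Y) :=
  [seq (c *: p.1, p.2) | p <- s].

Definition tmul (X Y : algType k) (s t : seq (X * Y)) : seq (X * Y) :=
  [seq (p.1 * q.1, p.2 * q.2) | p <- s, q <- t].

Definition tlinear (X Y Z : lmodType k) (F : X -> seq (Y * Z)) : Prop :=
  forall (c : k) (a b : X), teq2 (F (c *: a + b)) (tscale c (F a) ++ F b).

Definition talg_map (X Y Z : algType k) (F : X -> seq (Y * Z)) : Prop :=
  (forall a b : X, teq2 (F (a * b)) (tmul (F a) (F b))) /\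
  teq2 (F 1) [:: (1, 1)].

End Tensors.

Section Hopf.
Variable k : fieldType.

Record is_hopf (A : algType k) (D : A -> seq (A * A)) (e : A -> k) (S : A -> A)
  : Prop := IsHopf {
  hopf_D_lin : tlinear D;
  hopf_coassoc : forall a : A,
      teq3 [seq (q.1, q.2, p.2) | p <- D a, q <- D p.1]
           [seq (p.1, q.1, q.2) | p <- D a, q <- D p.2];
  hopf_e_lin : forall (c : k) (a b : A), e (c *: a + b) = c * e a + e b;
  hopf_counitl : forall a : A, \sum_(p <- D a) e p.1 *: p.2 = a;
  hopf_counitr : forall a : A, \sum_(p <- D a) e p.2 *: p.1 = a;
  hopf_D_alg : talg_map D;
  hopf_e_mul : forall a b : A, e (a * b) = e a * e b;
  hopf_e1 : e 1 = 1;
  hopf_S_lin : forall (c : k) (a b : A), S (c *: a + b) = c *: S a + S b;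
  hopf_antipodel : forall a : A, \sum_(p <- D a) S p.1 * p.2 = e a *: 1;
  hopf_antipoder : forall a : A, \sum_(p <- D a) p.1 * S p.2 = e a *: 1
}.

Record is_left_comodule_algebra (H A : algType k)
  (DH : H -> seq (H * H)) (eH : H -> k) (rho : A -> seq (H * A)) : Prop := {
  lca_lin : tlinear rho;
  lca_coassoc : forall a : A,
      teq3 [seq (q.1, q.2, p.2) | p <- rho a, q <- DH p.1]
           [seq (p.1, q.1, q.2) | p <- rho a, q <- rho p.2];
  lca_counit : forall a : A, \sum_(p <- rho a) eH p.1 *: p.2 = a;
  lca_alg : talg_map rho
}.

Record is_right_comodule_algebra (H A : algType k)
  (DA : A -> seq (A * A)) (eA : A -> k) (phi : H -> seq (H * A)) : Prop := {
  rca_lin : tlinear phi;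
  rca_coassoc : forall h : H,
      teq3 [seq (q.1, q.2, p.2) | p <- phi h, q <- phi p.1]
           [seq (p.1, q.1, q.2) | p <- phi h, q <- DA p.2];
  rca_counit : forall h : H, \sum_(p <- phi h) eA p.2 *: p.1 = h;
  rca_alg : talg_map phi
}.

Record is_hopf_matched_pair (A H : algType k)
  (DA : A -> seq (A * A)) (eA : A -> k)
  (DH : H -> seq (H * H)) (eH : H -> k)
  (rho : A -> seq (H * A)) (phi : H -> seq (H * A)) : Prop := {
  hmp_rho : is_left_comodule_algebra DH eH rho;
  hmp_phi : is_right_comodule_algebra DA eA phi;
  hm1a : forall a : A, \sum_(p <- rho a) eA p.2 *: p.1 = eA a *: 1;
  hm1b : forall h : H, \sum_(p <- phi h) eH p.1 *: p.2 = eH h *: 1;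
  hm2 : forall a : A,
      teq3 [seq (p.1, q.1, q.2) | p <- rho a, q <- DA p.2]
           (flatten [seq [seq (u.1 * w.1, u.2 * w.2, v.2)
                           | u <- rho p.1, w <- phi v.1]
                    | p <- DA a, v <- rho p.2]);
  hm3 : forall h : H,
      teq3 [seq (q.1, q.2, p.2) | p <- phi h, q <- DH p.1]
           (flatten [seq [seq (g.1, u.1 * w.1, u.2 * w.2)
                           | u <- rho g.2, w <- phi p.2]
                    | p <- DH h, g <- phi p.1]);
  hm4 : forall (a : A) (h : H),
      teq2 [seq (w.1 * v.1, w.2 * v.2) | w <- phi h, v <- rho a]
           [seq (v.1 * w.1, v.2 * w.2) | w <- phi h, v <- rho a]
}.

(* Hopf brace (A, D, D') : (A,m,1,D,e,S) and (A,m,1,D',e,T) Hopf algebras and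
   h_1' (x) h_2'1 (x) h_2'2 = h_11' S(h_2) h_31' (x) h_12' (x) h_32'. *)
Definition is_hopf_brace (A : algType k)
  (D : A -> seq (A * A)) (S : A -> A)
  (D' : A -> seq (A * A)) (T : A -> A) (e : A -> k) : Prop :=
  is_hopf D e S /\ is_hopf D' e T /\
  forall h : A,
    teq3 [seq (p.1, q.1, q.2) | p <- D' h, q <- D p.2]
         (flatten [seq [seq (u.1 * S t.1.2 * w.1, u.2, w.2)
                         | u <- D' t.1.1, w <- D' t.2]
                  | t <- [seq (q.1, q.2, p.2) | p <- D h, q <- D p.1]]).

Definition is_commutative_hopf_brace (A : algType k)
  (D : A -> seq (A * A)) (S : A -> A)
  (D' : A -> seq (A * A)) (T : A -> A) (e : A -> k) : Prop :=
  is_hopf_brace D S D' T e /\ (forall a b : A, a * b = b * a).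

End Hopf.

(* Main.v *)
Require Import Defs.
From mathcomp Require Import all_boot all_order all_algebra.
From mathcomp Require Import ring.
Import GRing.Theory.
Local Open Scope ring_scope.
Set Implicit Arguments. Unset Strict Implicit. Unset Printing Implicit Defensive.
Set Warnings "-notation-overridden,-ambiguous-paths".

Section Lin.
Variable k : fieldType.

Definition lin (V W : lmodType k) (g : V -> W) :=
  forall c x y, g (c *: x + y) = c *: g x + g y.

Lemma lin0 (V W : lmodType k) (g : V -> W) : lin g -> g 0 = 0.
Proof.
move=> h; have E := h 1 0 0; rewrite !scale1r addr0 in E.
have := congr1 (fun z => z - g 0) E; rewrite /= addrK subrr => E2.
by rewrite -E2.
Qed.

Lemma linD (V W : lmodType k) (g : V -> W) x y : lin g -> g (x + y) = g x + g y.
Proof. by move=> h; have := h 1 x y; rewrite !scale1r. Qed.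

Lemma linZ (V W : lmodType k) (g : V -> W) c x : lin g -> g (c *: x) = c *: g x.
Proof. by move=> h; have := h c x 0; rewrite !addr0 (lin0 h) addr0. Qed.

Lemma lin_sum (V W : lmodType k) (g : V -> W) I (s : seq I) (F : I -> V) :
  lin g -> g (\sum_(i <- s) F i) = \sum_(i <- s) g (F i).
Proof.
move=> h; elim: s => [|i s IH]; first by rewrite !big_nil (lin0 h).
by rewrite !big_cons (linD _ _ h) IH.
Qed.

Lemma lin_id (V : lmodType k) : lin (fun x : V => x).
Proof. by []. Qed.

Lemma lin_scale (V W : lmodType k) c (h : V -> W) : lin h -> lin (fun x => c *: h x).
Proof. by move=> H a x y; rewrite H scalerDr !scalerA mulrC. Qed.

Lemma lin_sumI (V W : lmodType k) I (s : seq I) (G : I -> V -> W) :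
  (forall i, lin (G i)) -> lin (fun x => \sum_(i <- s) G i x).
Proof.
move=> H c x y; elim: s => [|i s IH]; first by rewrite !big_nil scaler0 addr0.
by rewrite !big_cons IH H scalerDr addrACA.
Qed.

Lemma lin_add (V W : lmodType k) (g h : V -> W) : lin g -> lin h -> lin (fun x => g x + h x).
Proof. by move=> G H c x y; rewrite G H scalerDr addrACA. Qed.

End Lin.

Section Tens.
Variable k : fieldType.
Variable A : comAlgType k.

Definition bil (V : lmodType k) (f : A -> A -> V) :=
  (forall y, lin (fun x => f x y)) /\ (forall x, lin (fun y => f x y)).
Definition tril (V : lmodType k) (f : A -> A -> A -> V) :=
  [/\ (forall y z, lin (fun x => f x y z)), (forall x z, lin (fun y => f x y z))
    & (forall x y, lin (fun z => f x y z))].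

Lemma bil_bilinear (V : lmodType k) (f : A -> A -> V) : bil f -> bilinear_map f.
Proof. by case. Qed.
Lemma tril_trilinear (V : lmodType k) (f : A -> A -> A -> V) : tril f -> trilinear_map f.
Proof. by case. Qed.

Lemma teq2P (s t : seq (A * A)) : teq2 s t ->
  forall (V : lmodType k) (f : A -> A -> V), bil f -> \sum_(p <- s) f p.1 p.2 = \sum_(p <- t) f p.1 p.2.
Proof. by move=> H V f /bil_bilinear; apply: H. Qed.

Lemma teq3P (s t : seq (A * A * A)) : teq3 s t ->
  forall (V : lmodType k) (f : A -> A -> A -> V), tril f ->
  \sum_(p <- s) f p.1.1 p.1.2 p.2 = \sum_(p <- t) f p.1.1 p.1.2 p.2.
Proof. by move=> H V f /tril_trilinear; apply: H. Qed.

Lemma lin_mull a (h : A -> A) : lin h -> lin (fun x => a * h x).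
Proof. by move=> H c x y; rewrite H mulrDr scalerAr. Qed.
Lemma lin_mulr a (h : A -> A) : lin h -> lin (fun x => h x * a).
Proof. by move=> H c x y; rewrite H mulrDl scalerAl. Qed.

Lemma lin_tlin (F : A -> seq (A * A)) (V : lmodType k) (G : A * A -> V) (h : A -> A) :
  tlinear F -> lin h -> (forall y, lin (fun x => G (x, y))) -> (forall x, lin (fun y => G (x, y))) ->
  lin (fun a => \sum_(p <- F (h a)) G p).
Proof.
move=> HF Hh H1 H2 c x y; rewrite Hh.
have E : forall s, \sum_(p <- s) G p = \sum_(p <- s) (fun u v => G (u, v)) p.1 p.2.
  by move=> s; apply: eq_bigr => -[].
rewrite !E (teq2P (HF c (h x) (h y)) (f := fun u v => G (u, v))); last by split.
rewrite big_cat /= big_map; congr (_ + _).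
rewrite (lin_sum _ _ (lin_scale c (@lin_id _ V))) /=.
by apply: eq_bigr => p _; rewrite (linZ _ _ (H1 _)).
Qed.

Lemma lin_f1 (V : lmodType k) (f : A -> A -> A -> V) y z (h : A -> A) : tril f -> lin h -> lin (fun x => f (h x) y z).
Proof. by case=> H _ _ Hh c a b; rewrite Hh H. Qed.
Lemma lin_f2 (V : lmodType k) (f : A -> A -> A -> V) x z (h : A -> A) : tril f -> lin h -> lin (fun y => f x (h y) z).
Proof. by case=> _ H _ Hh c a b; rewrite Hh H. Qed.
Lemma lin_f3 (V : lmodType k) (f : A -> A -> A -> V) x y (h : A -> A) : tril f -> lin h -> lin (fun z => f x y (h z)).
Proof. by case=> _ _ H Hh c a b; rewrite Hh H. Qed.
Lemma lin_g1 (V : lmodType k) (f : A -> A -> V) y (h : A -> A) : bil f -> lin h -> lin (fun x => f (h x) y).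
Proof. by case=> H _ Hh c a b; rewrite Hh H. Qed.
Lemma lin_g2 (V : lmodType k) (f : A -> A -> V) x (h : A -> A) : bil f -> lin h -> lin (fun y => f x (h y)).
Proof. by case=> _ H Hh c a b; rewrite Hh H. Qed.

Lemma trilI (V : lmodType k) (f : A -> A -> A -> V) : (forall y z, lin (fun x => f x y z)) ->
  (forall x z, lin (fun y => f x y z)) -> (forall x y, lin (fun z => f x y z)) -> tril f.
Proof. by split. Qed.
Lemma bilI (V : lmodType k) (f : A -> A -> V) : (forall y, lin (fun x => f x y)) -> (forall x, lin (fun y => f x y)) -> bil f.
Proof. by split. Qed.

End Tens.

Section Main.
Variable k : fieldType.
Variable A : comAlgType k.
Variables (D' : A -> seq (A * A)) (e : A -> k) (T : A -> A) (rho phi : A -> seq (A * A)).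
Hypothesis HH : is_hopf D' e T.
Hypothesis HM : is_hopf_matched_pair D' e D' e rho phi.
Hypothesis HC : forall a : A, teq2 (D' a)
  (flatten [seq [seq (u.1 * w.1, u.2 * w.2) | u <- rho p.1, w <- phi p.2] | p <- D' a]).

Lemma Dlin : tlinear D'. Proof. exact: hopf_D_lin HH. Qed.
Lemma rlin : tlinear rho. Proof. exact: lca_lin (hmp_rho HM). Qed.
Lemma plin : tlinear phi. Proof. exact: rca_lin (hmp_phi HM). Qed.
Lemma Tlin : lin T. Proof. exact: hopf_S_lin HH. Qed.
Lemma elin (c : k) (a b : A) : e (c *: a + b) = c * e a + e b. Proof. exact: (hopf_e_lin HH c a b). Qed.

Lemma e0 : e 0 = 0.
Proof. by have := elin 1 0 0; rewrite scale1r addr0 mul1r => /(congr1 (fun z => z - e 0)); rewrite addrK subrr => <-. Qed.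
Lemma eD (a b : A) : e (a + b) = e a + e b. Proof. by have := elin 1 a b; rewrite scale1r mul1r. Qed.
Lemma eZ (c : k) (a : A) : e (c *: a) = c * e a. Proof. by have := elin c a 0; rewrite addr0 e0 addr0. Qed.
Lemma e_sum I (s : seq I) (F : I -> A) : e (\sum_(i <- s) F i) = \sum_(i <- s) e (F i).
Proof. elim: s => [|i s IH]; first by rewrite !big_nil e0. by rewrite !big_cons eD IH. Qed.
Lemma emul (a b : A) : e (a * b) = e a * e b. Proof. exact: (hopf_e_mul HH a b). Qed.
Lemma e1 : e 1 = 1. Proof. exact: (hopf_e1 HH). Qed.

Lemma lin_T (h : A -> A) : lin h -> lin (fun x => T (h x)).
Proof. by move=> H c x y; rewrite H Tlin. Qed.
Lemma lin_e (W : lmodType k) (v : W) (h : A -> A) : lin h -> lin (fun x => e (h x) *: v).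
Proof. by move=> H c x y; rewrite H elin scalerDl scalerA. Qed.

Definition Dl (a : A) := [seq (p.1 * T q.1, q.2) | p <- D' a, q <- rho p.2].
Definition Sd (a : A) := \sum_(q <- rho a) q.1 * T q.2.

Lemma Dl_sum (W : lmodType k) a (G : A * A -> W) :
  \sum_(x <- Dl a) G x = \sum_(p <- D' a) \sum_(q <- rho p.2) G (p.1 * T q.1, q.2).
Proof. by rewrite big_allpairs_dep. Qed.

Lemma Sd_lin : lin Sd.
Proof.
apply: (lin_tlin (h := id) (G := fun p => p.1 * T p.2) rlin) => //= y.
  exact: lin_mulr.
exact/lin_mull/lin_T.
Qed.
Lemma lin_S (h : A -> A) : lin h -> lin (fun x => Sd (h x)).
Proof. by move=> H c x y; rewrite H Sd_lin. Qed.

Ltac slin0 := first [ apply: lin_id | apply: lin_sumI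
  | apply: (lin_tlin Dlin) | apply: (lin_tlin rlin) | apply: (lin_tlin plin) | apply: lin_mulr | apply: lin_mull | apply: lin_T | apply: lin_S
  | apply: lin_e | apply: lin_scale ].

Ltac slin := repeat (match goal with
  | H : tril ?f |- tril ?f => exact H
  | H : bil ?f |- bil ?f => exact H
  | |- tril _ => apply: trilI => ? ? /=
  | |- bil _ => apply: bilI => ? /=
  | |- forall _, _ => move=> ? /=
  | |- lin _ => slin0
  | H : tril ?f |- lin _ => first [eapply lin_f1; first exact H | eapply lin_f2; first exact H | eapply lin_f3; first exact H]
  | H : bil ?f |- lin _ => first [eapply lin_g1; first exact H | eapply lin_g2; first exact H]
  end).

Lemma Dl_lin : tlinear Dl.
Proof.
move=> c a b V f Hf.
have Hb : bil f by split; case: Hf.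
rewrite big_cat big_map !Dl_sum /=.
rewrite (teq2P (Dlin c a b) (f := fun u v => \sum_(q <- rho v) f (u * T q.1) q.2)); last by slin.
rewrite big_cat big_map /=; congr (_ + _).
by apply: eq_bigr => p _; apply: eq_bigr => q _; rewrite scalerAl.
Qed.

Ltac slin0 ::= first [ apply: lin_id | apply: lin_sumI
  | apply: (lin_tlin Dlin) | apply: (lin_tlin rlin) | apply: (lin_tlin plin) | apply: (lin_tlin Dl_lin)
  | apply: lin_mulr | apply: lin_mull | apply: lin_T | apply: lin_S
  | apply: lin_e | apply: lin_scale ].

Section SumForms.
Variable W : lmodType k.

Lemma Dcoas a (f : A -> A -> A -> W) : tril f ->
  \sum_(p <- D' a) \sum_(q <- D' p.1) f q.1 q.2 p.2 =
  \sum_(p <- D' a) \sum_(q <- D' p.2) f p.1 q.1 q.2.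
Proof. by move=> Hf; have := teq3P (hopf_coassoc HH a) Hf; rewrite !big_allpairs_dep. Qed.

Lemma Dmul a b (f : A -> A -> W) : bil f ->
  \sum_(p <- D' (a * b)) f p.1 p.2 =
  \sum_(p <- D' a) \sum_(q <- D' b) f (p.1 * q.1) (p.2 * q.2).
Proof. by move=> Hf; have := teq2P ((hopf_D_alg HH).1 a b) Hf; rewrite /tmul big_allpairs_dep. Qed.

Lemma D1 (f : A -> A -> W) : bil f -> \sum_(p <- D' 1) f p.1 p.2 = f 1 1.
Proof. by move=> Hf; have := teq2P ((hopf_D_alg HH).2) Hf; rewrite big_seq1. Qed.

Lemma Dcul a : \sum_(p <- D' a) e p.1 *: p.2 = a. Proof. exact: (hopf_counitl HH a). Qed.
Lemma Dcur a : \sum_(p <- D' a) e p.2 *: p.1 = a. Proof. exact: (hopf_counitr HH a). Qed.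
Lemma Tantl a : \sum_(p <- D' a) T p.1 * p.2 = e a *: 1. Proof. exact: (hopf_antipodel HH a). Qed.
Lemma Tantr a : \sum_(p <- D' a) p.1 * T p.2 = e a *: 1. Proof. exact: (hopf_antipoder HH a). Qed.

Lemma rcoas a (f : A -> A -> A -> W) : tril f ->
  \sum_(p <- rho a) \sum_(q <- D' p.1) f q.1 q.2 p.2 =
  \sum_(p <- rho a) \sum_(q <- rho p.2) f p.1 q.1 q.2.
Proof. by move=> Hf; have := teq3P (lca_coassoc (hmp_rho HM) a) Hf; rewrite !big_allpairs_dep. Qed.

Lemma rcu a : \sum_(p <- rho a) e p.1 *: p.2 = a. Proof. exact: (lca_counit (hmp_rho HM) a). Qed.

Lemma rmul a b (f : A -> A -> W) : bil f ->
  \sum_(p <- rho (a * b)) f p.1 p.2 =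
  \sum_(p <- rho a) \sum_(q <- rho b) f (p.1 * q.1) (p.2 * q.2).
Proof. by move=> Hf; have := teq2P ((lca_alg (hmp_rho HM)).1 a b) Hf; rewrite /tmul big_allpairs_dep. Qed.

Lemma r1 (f : A -> A -> W) : bil f -> \sum_(p <- rho 1) f p.1 p.2 = f 1 1.
Proof. by move=> Hf; have := teq2P ((lca_alg (hmp_rho HM)).2) Hf; rewrite big_seq1. Qed.

Lemma hm1a' a : \sum_(p <- rho a) e p.2 *: p.1 = e a *: 1. Proof. exact: (hm1a HM a). Qed.

Lemma hm2s a (f : A -> A -> A -> W) : tril f ->
  \sum_(p <- rho a) \sum_(q <- D' p.2) f p.1 q.1 q.2 =
  \sum_(p <- D' a) \sum_(v <- rho p.2) \sum_(u <- rho p.1) \sum_(w <- phi v.1)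
     f (u.1 * w.1) (u.2 * w.2) v.2.
Proof.
move=> Hf; have := teq3P (hm2 HM a) Hf; rewrite big_allpairs_dep big_flatten /= => ->.
rewrite big_allpairs_dep; apply: eq_bigr => p _; apply: eq_bigr => v _.
by rewrite big_allpairs_dep.
Qed.

Lemma HCs a (f : A -> A -> W) : bil f ->
  \sum_(p <- D' a) f p.1 p.2 =
  \sum_(p <- D' a) \sum_(u <- rho p.1) \sum_(w <- phi p.2) f (u.1 * w.1) (u.2 * w.2).
Proof.
move=> Hf; rewrite (teq2P (HC a) Hf) big_flatten /= big_map.
by apply: eq_bigr => p _; rewrite big_allpairs_dep.
Qed.

End SumForms.

Lemma eT a : e (T a) = e a.
Proof.
have H := congr1 e (Tantl a).
rewrite eZ e1 mulr1 e_sum in H.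
rewrite -{1}(Dcur a) (lin_sum _ _ Tlin) e_sum -H.
by apply: eq_bigr => p _; rewrite (linZ _ _ Tlin) eZ emul mulrC.
Qed.

Lemma T1 : T 1 = 1.
Proof.
have := Tantl 1; rewrite (D1 (f := fun u v => T u * v)); last by slin.
by rewrite mulr1 e1 scale1r.
Qed.

Lemma Tantr2 c a b : c * (e (a * b) *: 1) =
  \sum_(u <- D' a) \sum_(w <- D' b) c * ((u.1 * w.1) * T (u.2 * w.2)).
Proof.
rewrite -Tantr (Dmul _ _ (f := fun u v => u * T v)); last by slin.
rewrite mulr_sumr; apply: eq_bigr => u _; by rewrite mulr_sumr.
Qed.

Lemma re1 (a b c d r : A) : a * b * (c * d * r) = a * c * (b * d * r).
Proof. by ring. Qed.

Lemma re2 (x a b c d : A) : x * a * b * c * d = x * (a * c) * (b * d).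
Proof. by ring. Qed.

Lemma re3 (p t r s : A) : p * t * (r * s) = p * (t * r) * s.
Proof. by ring. Qed.

Lemma re4 (x a s y b : A) : x * a * s * (y * b) = s * y * (x * a * b).
Proof. by ring. Qed.

Lemma TantlM a R : \sum_(w <- D' a) (T w.1 * w.2) * R = e a *: R.
Proof. by rewrite -mulr_suml Tantl -scalerAl mul1r. Qed.

Lemma Tmul x y : T (x * y) = T x * T y.
Proof.
symmetry.
have -> : T x * T y = \sum_(p <- D' x) \sum_(q <- D' y) T p.1 * T q.1 * (e (p.2 * q.2) *: 1).
  rewrite -{1}(Dcur x) -{1}(Dcur y) !(lin_sum _ _ Tlin) mulr_suml; apply: eq_bigr => p _.
  rewrite mulr_sumr; apply: eq_bigr => q _.
  by rewrite !(linZ _ _ Tlin) emul -scalerAl -scalerAr mulr_algr scalerA.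
under eq_bigr => p _ do under eq_bigr => q _ do rewrite Tantr2.
under eq_bigr => p _ do rewrite exchange_big.
rewrite -(Dcoas x (f := fun a b c => \sum_(q <- D' y) \sum_(w <- D' q.2)
   T a * T q.1 * ((b * w.1) * T (c * w.2)))); last by slin.
under eq_bigr => p _ do under eq_bigr => u _ do
  (rewrite -(Dcoas y (f := fun a b c => T u.1 * T a * (u.2 * b * T (p.2 * c)))); last by slin).
under eq_bigr => p _ do rewrite exchange_big.
under eq_bigr => p _ do under eq_bigr => q _ do under eq_bigr => u _ do under eq_bigr => w _ do rewrite re1.
under eq_bigr => p _ do under eq_bigr => q _ do under eq_bigr => u _ do rewrite -mulr_sumr TantlM.
under eq_bigr => p _ do under eq_bigr => q _ do rewrite TantlM.
rewrite -[in RHS](Dcul x) -[in RHS](Dcul y) mulr_suml (lin_sum _ _ Tlin).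
apply: eq_bigr => p _; rewrite mulr_sumr (lin_sum _ _ Tlin); apply: eq_bigr => q _.
by rewrite -scalerAl -scalerAr !(linZ _ _ Tlin).
Qed.

Section Coact.
Variable W : lmodType k.

Lemma Cinv1 z (G : A -> A -> W) : bil G ->
  \sum_(q <- rho z) \sum_(r <- rho q.2) G (q.1 * T r.1) r.2 = G 1 z.
Proof.
move=> HG; rewrite -(rcoas z (f := fun a b c => G (a * T b) c)); last by slin.
have [H1 H2] := HG.
under eq_bigr => q _ do rewrite -(lin_sum _ _ (H1 q.2)) Tantr (linZ _ _ (H1 q.2)).
rewrite -[in RHS](rcu z) (lin_sum _ _ (H2 1)).
by apply: eq_bigr => q _; rewrite (linZ _ _ (H2 1)).
Qed.

Lemma Cinv2 z (G : A -> A -> W) : bil G ->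
  \sum_(q <- rho z) \sum_(r <- rho q.2) G (T q.1 * r.1) r.2 = G 1 z.
Proof.
move=> HG; rewrite -(rcoas z (f := fun a b c => G (T a * b) c)); last by slin.
have [H1 H2] := HG.
under eq_bigr => q _ do rewrite -(lin_sum _ _ (H1 q.2)) Tantl (linZ _ _ (H1 q.2)).
rewrite -[in RHS](rcu z) (lin_sum _ _ (H2 1)).
by apply: eq_bigr => q _; rewrite (linZ _ _ (H2 1)).
Qed.

Lemma Rl a (g : A -> A -> W) : bil g ->
  \sum_(p <- D' a) g p.1 p.2 = \sum_(x <- Dl a) \sum_(r <- rho x.2) g (x.1 * r.1) r.2.
Proof.
move=> Hg; rewrite Dl_sum /=.
under [in RHS]eq_bigr => p _ do under eq_bigr => q _ do under eq_bigr => r _ do rewrite -mulrA.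
apply: eq_bigr => p _.
by rewrite (Cinv2 p.2 (G := fun m v => g (p.1 * m) v)) ?mulr1 //; slin.
Qed.

Lemma K1T b (G : A -> A -> A -> W) : tril G ->
  \sum_(q <- rho b) \sum_(r <- Dl q.2) \sum_(s <- rho r.2) G q.1 (r.1 * s.1) s.2 =
  \sum_(p <- Dl b) \sum_(u <- rho p.1) \sum_(w <- rho p.2) \sum_(s <- rho w.2)
     G (u.1 * w.1) (u.2 * s.1) s.2.
Proof.
move=> HG.
under eq_bigr => q _ do (rewrite -(Rl q.2 (g := fun x y => G q.1 x y)); last by slin).
rewrite (hm2s b (f := G)) //.
symmetry.
under eq_bigr => p _ do rewrite exchange_big.
under eq_bigr => p _ do under eq_bigr => w _ do rewrite exchange_big.
under eq_bigr => p _ do (rewrite -(rcoas p.2 (f := fun x y z =>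
   \sum_(u <- rho p.1) G (u.1 * x) (u.2 * y) z)); last by slin).
under eq_bigr => p _ do under eq_bigr => w _ do (rewrite (HCs w.1 (f := fun a b =>
   \sum_(u <- rho p.1) G (u.1 * a) (u.2 * b) w.2)); last by slin).
under eq_bigr => p _ do under eq_bigr => w _ do under eq_bigr => y _ do
  under eq_bigr => al _ do rewrite exchange_big.
under eq_bigr => p _ do under eq_bigr => w _ do under eq_bigr => y _ do rewrite exchange_big.
under eq_bigr => p _ do under eq_bigr => w _ do under eq_bigr => y _ do
  under eq_bigr => u _ do under eq_bigr => al _ do under eq_bigr => be _ do rewrite !mulrA.
under eq_bigr => p _ do under eq_bigr => w _ do under eq_bigr => y _ do
  (rewrite -(rmul p.1 y.1 (f := fun a c => \sum_(be <- phi y.2) G (a * be.1) (c * be.2) w.2));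
   last by slin).
under eq_bigr => p _ do (rewrite (rcoas p.2 (f := fun a c z =>
   \sum_(ga <- rho (p.1 * a)) \sum_(be <- phi c) G (ga.1 * be.1) (ga.2 * be.2) z)); last by slin).
rewrite -(Rl b (g := fun a z => \sum_(s <- rho z) \sum_(ga <- rho a) \sum_(be <- phi s.1)
   G (ga.1 * be.1) (ga.2 * be.2) s.2)) //; slin.
Qed.

Lemma Th1inv (F : A -> A -> A -> W) : tril F -> forall x y z,
  F x y z = \sum_(s <- rho z) \sum_(t <- rho s.2) F x (y * s.1 * T t.1) t.2.
Proof.
move=> HF x y z; symmetry.
under eq_bigr => s _ do under eq_bigr => t _ do rewrite -mulrA.
by rewrite (Cinv1 z (G := fun m v => F x (y * m) v)) ?mulr1 //; slin.
Qed.

Lemma K1 b (F : A -> A -> A -> W) : tril F ->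
  \sum_(q <- rho b) \sum_(r <- Dl q.2) F q.1 r.1 r.2 =
  \sum_(p <- Dl b) \sum_(u <- rho p.1) \sum_(w <- rho p.2) F (u.1 * w.1) u.2 w.2.
Proof.
move=> HF.
under eq_bigr => q _ do under eq_bigr => r _ do rewrite (Th1inv HF).
under [in RHS]eq_bigr => p _ do under eq_bigr => u _ do under eq_bigr => w _ do rewrite (Th1inv HF).
rewrite (K1T b (G := fun x y z => \sum_(t <- rho z) F x (y * T t.1) t.2)) //; slin.
Qed.

Definition Xinv (f : A -> A -> A -> W) := fun x y z =>
  \sum_(t <- rho z) \sum_(a' <- rho (y * T t.1)) \sum_(b' <- rho t.2)
    f (x * T a'.1 * T b'.1) a'.2 b'.2.

Lemma Xinv_tril f : tril f -> tril (Xinv f).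
Proof. by move=> Hf; rewrite /Xinv; slin. Qed.

Lemma Xi (f : A -> A -> A -> W) : tril f -> forall x y z,
  f x y z = \sum_(al <- rho y) \sum_(be <- rho z) \sum_(s <- rho be.2)
     Xinv f (x * al.1 * be.1) (al.2 * s.1) s.2.
Proof.
move=> Hf x y z; symmetry; rewrite /Xinv.
under eq_bigr => al _ do under eq_bigr => be _ do under eq_bigr => s _ do
  under eq_bigr => t _ do rewrite -(mulrA al.2).
under eq_bigr => al _ do under eq_bigr => be _ do (rewrite (Cinv1 be.2 (G := fun m v =>
  \sum_(a' <- rho (al.2 * m)) \sum_(b' <- rho v) f (x * al.1 * be.1 * T a'.1 * T b'.1) a'.2 b'.2));
  last by slin).
under eq_bigr => al _ do rewrite mulr1 exchange_big.
under eq_bigr => al _ do under eq_bigr => a' _ do under eq_bigr => be _ do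
  under eq_bigr => b' _ do rewrite re2.
under eq_bigr => al _ do under eq_bigr => a' _ do (rewrite (Cinv1 z (G := fun m v =>
  f (x * (al.1 * T a'.1) * m) a'.2 v)); last by slin).
under eq_bigr => al _ do under eq_bigr => a' _ do rewrite mulr1.
by rewrite (Cinv1 y (G := fun m v => f (x * m) v z)) ?mulr1 //; slin.
Qed.

Lemma coasR a (g : A -> A -> A -> W) : tril g ->
  \sum_(p <- Dl a) \sum_(q <- Dl p.2) \sum_(al <- rho q.1) \sum_(be <- rho q.2) \sum_(s <- rho be.2)
    g (p.1 * al.1 * be.1) (al.2 * s.1) s.2 =
  \sum_(p <- D' a) \sum_(r <- D' p.2) g p.1 r.1 r.2.
Proof.
move=> Hg.
under eq_bigr => p _ do under eq_bigr => q _ do under eq_bigr => al _ do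
  under eq_bigr => be _ do under eq_bigr => s _ do rewrite -(mulrA p.1).
under eq_bigr => p _ do (rewrite -(K1 p.2 (F := fun x y z =>
  \sum_(s <- rho z) g (p.1 * x) (y * s.1) s.2)); last by slin).
under eq_bigr => p _ do under eq_bigr => q _ do (rewrite -(Rl q.2 (g := fun x y =>
  g (p.1 * q.1) x y)); last by slin).
by rewrite -(Rl a (g := fun x y => \sum_(r <- D' y) g x r.1 r.2)) //; slin.
Qed.

Lemma coasL a (g : A -> A -> A -> W) : tril g ->
  \sum_(p <- Dl a) \sum_(q <- Dl p.1) \sum_(al <- rho q.2) \sum_(be <- rho p.2) \sum_(s <- rho be.2)
    g (q.1 * al.1 * be.1) (al.2 * s.1) s.2 =
  \sum_(p <- D' a) \sum_(r <- D' p.1) g r.1 r.2 p.2.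
Proof.
move=> Hg; symmetry.
rewrite (Rl a (g := fun x z => \sum_(r <- D' x) g r.1 r.2 z)); last by slin.
under eq_bigr => p _ do under eq_bigr => be _ do
  (rewrite (Dmul p.1 be.1 (f := fun x y => g x y be.2)); last by slin).
under eq_bigr => p _ do under eq_bigr => be _ do rewrite exchange_big.
under eq_bigr => p _ do (rewrite (rcoas p.2 (f := fun x y z =>
  \sum_(r <- D' p.1) g (r.1 * x) (r.2 * y) z)); last by slin).
under eq_bigr => p _ do under eq_bigr => be _ do under eq_bigr => s _ do
  (rewrite (Rl p.1 (g := fun x y => g (x * be.1) (y * s.1) s.2)); last by slin).
under eq_bigr => p _ do under eq_bigr => be _ do rewrite exchange_big.
under eq_bigr => p _ do under eq_bigr => be _ do under eq_bigr => q _ do rewrite exchange_big.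
under eq_bigr => p _ do rewrite exchange_big.
under eq_bigr => p _ do under eq_bigr => q _ do rewrite exchange_big.
by [].
Qed.

Lemma Dl_coas a (f : A -> A -> A -> W) : tril f ->
  \sum_(p <- Dl a) \sum_(q <- Dl p.1) f q.1 q.2 p.2 =
  \sum_(p <- Dl a) \sum_(q <- Dl p.2) f p.1 q.1 q.2.
Proof.
move=> Hf.
under eq_bigr => p _ do under eq_bigr => q _ do rewrite (Xi Hf).
under [in RHS]eq_bigr => p _ do under eq_bigr => q _ do rewrite (Xi Hf).
have HX := Xinv_tril Hf.
by rewrite (coasL _ HX) (coasR _ HX) (Dcoas _ HX).
Qed.

End Coact.

Lemma Dl_cul a : \sum_(x <- Dl a) e x.1 *: x.2 = a.
Proof.
rewrite Dl_sum; under eq_bigr => p _ do under eq_bigr => q _ do rewrite /= emul eT -scalerA.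
under eq_bigr => p _ do rewrite -scaler_sumr rcu.
exact: Dcul.
Qed.

Lemma Dl_cur a : \sum_(x <- Dl a) e x.2 *: x.1 = a.
Proof.
rewrite Dl_sum; under eq_bigr => p _ do under eq_bigr => q _ do rewrite /= scalerAr -(linZ _ _ Tlin).
under eq_bigr => p _ do rewrite -mulr_sumr -(lin_sum _ _ Tlin) hm1a' (linZ _ _ Tlin) T1 -scalerAr mulr1.
exact: Dcur.
Qed.

Lemma Sd_mul x y : Sd (x * y) = Sd x * Sd y.
Proof.
rewrite /Sd (rmul x y (f := fun u v => u * T v)); last by slin.
rewrite mulr_suml; apply: eq_bigr => q _; rewrite mulr_sumr; apply: eq_bigr => q' _.
by rewrite Tmul /=; ring.
Qed.

Lemma Sd1 : Sd 1 = 1.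
Proof. by rewrite /Sd (r1 (f := fun u v => u * T v)) ?T1 ?mulr1 //; slin. Qed.

Lemma Dl_antr a : \sum_(x <- Dl a) x.1 * Sd x.2 = e a *: 1.
Proof.
rewrite Dl_sum /Sd /=.
under eq_bigr => p _ do under eq_bigr => q _ do rewrite mulr_sumr.
under eq_bigr => p _ do under eq_bigr => q _ do under eq_bigr => r _ do rewrite re3.
under eq_bigr => p _ do (rewrite (Cinv2 p.2 (G := fun m v => p.1 * m * T v)); last by slin).
under eq_bigr => p _ do rewrite mulr1.
exact: Tantr.
Qed.

Lemma Sd2 a : Sd (Sd a) = a.
Proof.
rewrite -{1}(Dl_cul a) (lin_sum _ _ (lin_S (lin_S (@lin_id _ _)))).
under eq_bigr => x _ do rewrite (linZ _ _ (lin_S (lin_S (@lin_id _ _)))) -(mul1r (Sd (Sd x.2))) scalerAl -Dl_antr mulr_suml.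
rewrite (Dl_coas a (f := fun u v w => u * Sd v * Sd (Sd w))); last by slin.
under eq_bigr => x _ do under eq_bigr => y _ do rewrite -mulrA -Sd_mul.
under eq_bigr => x _ do rewrite -mulr_sumr -(lin_sum _ _ Sd_lin) Dl_antr (linZ _ _ Sd_lin) Sd1 -scalerAr mulr1.
exact: Dl_cur.
Qed.

Lemma Dl_antl a : \sum_(x <- Dl a) Sd x.1 * x.2 = e a *: 1.
Proof.
under eq_bigr => x _ do rewrite -(Sd2 x.2) -Sd_mul.
by rewrite -(lin_sum _ _ Sd_lin) Dl_antr (linZ _ _ Sd_lin) Sd1.
Qed.

Section Final.
Variable W : lmodType k.

Lemma Dl_mul a b (f : A -> A -> W) : bil f ->
  \sum_(x <- Dl (a * b)) f x.1 x.2 = \sum_(x <- Dl a) \sum_(y <- Dl b) f (x.1 * y.1) (x.2 * y.2).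
Proof.
move=> Hf; rewrite Dl_sum /=.
rewrite (Dmul a b (f := fun u v => \sum_(q <- rho v) f (u * T q.1) q.2)); last by slin.
cbv beta.
under [in LHS]eq_bigr => p _ do under eq_bigr => p' _ do
  (rewrite (rmul p.2 p'.2 (f := fun u v => f (p.1 * p'.1 * T u) v)); last by slin).
rewrite Dl_sum; under [in RHS]eq_bigr => p _ do under eq_bigr => q _ do rewrite Dl_sum.
under [in RHS]eq_bigr => p _ do rewrite exchange_big.
apply: eq_bigr => p _; apply: eq_bigr => p' _; apply: eq_bigr => q _; apply: eq_bigr => q' _.
by rewrite /= Tmul; congr (f _ _); ring.
Qed.

Lemma Dl_1 (f : A -> A -> W) : bil f -> \sum_(x <- Dl 1) f x.1 x.2 = f 1 1.
Proof.
move=> Hf; rewrite Dl_sum /=.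
rewrite (D1 (f := fun u v => \sum_(q <- rho v) f (u * T q.1) q.2)); last by slin.
by rewrite (r1 (f := fun u v => f (1 * T u) v)) ?T1 ?mulr1 //; slin.
Qed.

Lemma antl_ctx c (G : A -> W) : lin G ->
  \sum_(y <- Dl c) G (Sd y.1 * y.2) = e c *: G 1.
Proof. by move=> HG; rewrite -(lin_sum _ _ HG) Dl_antl (linZ _ _ HG). Qed.

Lemma cul_ctx c (K : A -> W) : lin K -> \sum_(q <- Dl c) e q.1 *: K q.2 = K c.
Proof.
move=> HK; rewrite -{2}(Dl_cul c) (lin_sum _ _ HK).
by apply: eq_bigr => q _; rewrite (linZ _ _ HK).
Qed.

Lemma brace h (f : A -> A -> A -> W) : tril f ->
  \sum_(p <- D' h) \sum_(q <- Dl p.2) f p.1 q.1 q.2 =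
  \sum_(p <- Dl h) \sum_(q <- Dl p.1) \sum_(u <- D' q.1) \sum_(w <- D' p.2)
     f (u.1 * Sd q.2 * w.1) u.2 w.2.
Proof.
move=> Hf.
rewrite (Rl h (g := fun x y => \sum_(q <- Dl y) f x q.1 q.2)); last by slin.
under eq_bigr => p _ do (rewrite (K1 p.2 (F := fun x y z => f (p.1 * x) y z)); last by slin).
symmetry.
under [in LHS]eq_bigr => p _ do under eq_bigr => q _ do
  (rewrite (Rl q.1 (g := fun x y => \sum_(w <- D' p.2) f (x * Sd q.2 * w.1) y w.2)); last by slin).
under [in LHS]eq_bigr => p _ do under eq_bigr => q _ do under eq_bigr => x _ do under eq_bigr => al _ do
  (rewrite (Rl p.2 (g := fun y z => f (x.1 * al.1 * Sd q.2 * y) al.2 z)); last by slin).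
rewrite (Dl_coas h (f := fun a b c => \sum_(x <- Dl a) \sum_(al <- rho x.2) \sum_(y <- Dl c)
   \sum_(be <- rho y.2) f (x.1 * al.1 * Sd b * (y.1 * be.1)) al.2 be.2)); last by slin.
under [in LHS]eq_bigr => p _ do under eq_bigr => q _ do under eq_bigr => x _ do rewrite exchange_big.
under [in LHS]eq_bigr => p _ do under eq_bigr => q _ do rewrite exchange_big.
under [in LHS]eq_bigr => p _ do (rewrite -(Dl_coas p.2 (f := fun b c d => \sum_(x <- Dl p.1)
   \sum_(al <- rho x.2) \sum_(be <- rho d) f (x.1 * al.1 * Sd b * (c * be.1)) al.2 be.2)); last by slin).
under [in LHS]eq_bigr => p _ do under eq_bigr => q _ do rewrite exchange_big.
under [in LHS]eq_bigr => p _ do under eq_bigr => q _ do under eq_bigr => x _ do rewrite exchange_big.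
under [in LHS]eq_bigr => p _ do under eq_bigr => q _ do under eq_bigr => x _ do under eq_bigr => al _ do
  rewrite exchange_big.
under [in LHS]eq_bigr => p _ do under eq_bigr => q _ do under eq_bigr => x _ do under eq_bigr => al _ do
  under eq_bigr => be _ do under eq_bigr => y _ do rewrite re4.
under [in LHS]eq_bigr => p _ do under eq_bigr => q _ do under eq_bigr => x _ do under eq_bigr => al _ do
  under eq_bigr => be _ do (rewrite (antl_ctx q.1 (G := fun m => f (m * (x.1 * al.1 * be.1)) al.2 be.2));
  last by slin).
under [in LHS]eq_bigr => p _ do under eq_bigr => q _ do under eq_bigr => x _ do under eq_bigr => al _ do
  rewrite -scaler_sumr.
under [in LHS]eq_bigr => p _ do under eq_bigr => q _ do under eq_bigr => x _ do rewrite -scaler_sumr.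
under [in LHS]eq_bigr => p _ do under eq_bigr => q _ do rewrite -scaler_sumr.
under [in LHS]eq_bigr => p _ do (rewrite (cul_ctx p.2 (K := fun z => \sum_(x <- Dl p.1) \sum_(al <- rho x.2)
   \sum_(be <- rho z) f (1 * (x.1 * al.1 * be.1)) al.2 be.2)); last by slin).
rewrite (Dl_coas h (f := fun a b c => \sum_(al <- rho b) \sum_(be <- rho c)
   f (1 * (a * al.1 * be.1)) al.2 be.2)); last by slin.
apply: eq_bigr => p _; apply: eq_bigr => q _; apply: eq_bigr => u _; apply: eq_bigr => w _.
by rewrite mul1r mulrA.
Qed.

End Final.

End Main.

Unset Implicit Arguments.
Lemma tril_of (k : fieldType) (A : comAlgType k) (V : lmodType k) (f : A -> A -> A -> V) :
  trilinear_map f -> tril f.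
Proof. by case=> [H1 [H2 H3]]; split. Qed.

Theorem proposition3p4 (k : fieldType) (A : comAlgType k)
  (D' : A -> seq (A * A)) (e : A -> k) (T : A -> A)
  (rho : A -> seq (A * A)) (phi : A -> seq (A * A)) :
  is_hopf D' e T ->
  is_hopf_matched_pair D' e D' e rho phi ->
  (forall a : A,
     teq2 (D' a)
          (flatten [seq [seq (u.1 * w.1, u.2 * w.2) | u <- rho p.1, w <- phi p.2]
                   | p <- D' a])) ->
  is_commutative_hopf_brace
    (fun a : A => [seq (p.1 * T q.1, q.2) | p <- D' a, q <- rho p.2])
    (fun a : A => \sum_(q <- rho a) q.1 * T q.2)
    D' T e.
Proof.
move=> HH HM HC.
change (is_commutative_hopf_brace (Dl D' T rho) (Sd T rho) D' T e).
split; last exact: mulrC.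
split; last split; first split.
- exact: (Dl_lin HH HM).
- move=> a V f /tril_of Hf; rewrite big_allpairs_dep [RHS]big_allpairs_dep; first [exact: (Dl_coas HH HM HC) | exact: (Dl_coas HH HM)].
- exact: (hopf_e_lin HH).
- first [exact: (Dl_cul HH HM HC) | exact: (Dl_cul HH HM)].
- first [exact: (Dl_cur HH HM HC) | exact: (Dl_cur HH HM)].
- split.
  + move=> a b V f Hf; rewrite /tmul [RHS]big_allpairs_dep; exact: (Dl_mul HH HM a b Hf).
  + move=> V f Hf; rewrite [RHS]big_seq1; exact: (Dl_1 HH HM Hf).
- exact: (hopf_e_mul HH).
- exact: (hopf_e1 HH).
- first [exact: (Sd_lin HH HM HC) | exact: (Sd_lin HH HM)].
- first [exact: (Dl_antl HH HM HC) | exact: (Dl_antl HH HM)].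
- first [exact: (Dl_antr HH HM HC) | exact: (Dl_antr HH HM)].
- exact: HH.
- move=> h V f /tril_of Hf.
  rewrite big_allpairs_dep big_flatten big_map big_allpairs_dep /=.
  under [in RHS]eq_bigr => p _ do under eq_bigr => q _ do rewrite big_allpairs_dep /=.
  first [exact: (brace HH HM HC) | exact: (brace HH HM)].
Qed.
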